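(* Let $n\ge 3$, let $k$ be an integer with $0\le k\le\frac n3$, and let $t\in\{0,\dots,n-1\}$. There is a function $f$, assigning a real number to every multiset of $n-k$ unlabelled graphs on $n-1$ vertices, such that for every graph $G$ on $n$ vertices and every sub-multiset $\mathcal{C}$ of $\mathcal{D}(G)$ of size $n-k$, $$\tfrac14 d_t(G)-1\le f(\mathcal{C})\le d_{t-1}(G)+d_t(G)+d_{t+1}(G),$$ where $d_{-1}(G)=d_n(G)=0$.
   Context: All graphs are finite, simple and undirected. For a graph $G'$ and integer $t$, $d_t(G')$ is the number of vertices of degree $t$ in $G'$. For $v\in V(G)$, the card $G-v$ is obtained by deleting $v$ and its incident edges; the deck $\mathcal{D}(G)$ is the multiset of the $n$ cards $G-v$, $v\in V(G)$, up to isomorphism. *)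

(* Defs.v *)
From mathcomp Require Import all_boot all_fingroup.
From Stdlib Require Import Reals.
Set Implicit Arguments. Unset Strict Implicit. Unset Printing Implicit Defensive.

Definition simple_graph (n : nat) (G : rel 'I_n) : Prop :=
  (forall x y, G x y = G y x) /\ (forall x, G x x = false).

Definition deg (n : nat) (G : rel 'I_n) (v : 'I_n) : nat := #|[pred u | G v u]|.
Definition dcount (n : nat) (G : rel 'I_n) (t : nat) : nat :=
  #|[pred v | deg G v == t]|.
Definition dcount_pred (n : nat) (G : rel 'I_n) (t : nat) : nat :=
  if t is t'.+1 then dcount G t' else 0.

(* The card G - v, relabelled on 'I_(n-1) by the order-preserving map
   x |-> bump v x (vertices below v keep their label, the others shift). *)
Definition deck_card (n : nat) (G : rel 'I_n) (v : 'I_n) : rel 'I_n.-1 :=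
  fun x y => G (insubd v (bump v x)) (insubd v (bump v y)).

Definition gr_iso (m : nat) (G1 G2 : rel 'I_m) : Prop :=
  exists p : {perm 'I_m}, forall x y, G1 x y = G2 (p x) (p y).

(* A function on sequences of labelled graphs that only depends on the
   multiset of isomorphism classes, i.e. a function on multisets of
   unlabelled graphs. *)
Definition multiset_iso_invariant (m : nat) (f : seq (rel 'I_m) -> R) : Prop :=
  forall s1 s2 : seq (rel 'I_m), forall (Hs : size s2 = size s1),
    (exists p : {perm 'I_(size s1)},
        forall i : 'I_(size s1),
          gr_iso (nth (fun _ _ => false) s1 i) (nth (fun _ _ => false) s2 (p i))) ->
    f s1 = f s2.

(* Main.v *)
Require Import Defs.
From mathcomp Require Import all_boot all_fingroup.
From Stdlib Require Import Reals.
From mathcomp Require Import zify.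
From Stdlib Require Import Lra.
Open Scope nat_scope.
Set Implicit Arguments. Unset Strict Implicit.

Lemma card_sum (T : finType) (A : pred T) : #|A| = \sum_(x : T) (x \in A).
Proof.
rewrite -sum1_card big_mkcond /=; apply: eq_bigr => x _; by case: (x \in A).
Qed.

Lemma deg_sum m (H : rel 'I_m) v : deg H v = \sum_u H v u.
Proof. by rewrite /deg card_sum. Qed.

Lemma dcount_sum m (H : rel 'I_m) t : dcount H t = \sum_u (deg H u == t).
Proof. by rewrite /dcount card_sum. Qed.

Lemma dcount_iso m (H1 H2 : rel 'I_m) t : gr_iso H1 H2 -> dcount H1 t = dcount H2 t.
Proof.
case=> p Hp.
have E : forall x, deg H1 x = deg H2 (p x).
  move=> x; rewrite !deg_sum [RHS](reindex_inj (@perm_inj _ p)) /=.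
  by apply: eq_bigr => u _; rewrite Hp.
rewrite !dcount_sum [RHS](reindex_inj (@perm_inj _ p)) /=.
by apply: eq_bigr => u _; rewrite E.
Qed.

Definition hh (t : nat) m (H : rel 'I_m) := dcount_pred H t + dcount H t.

Lemma hh_iso t m (H1 H2 : rel 'I_m) : gr_iso H1 H2 -> hh t H1 = hh t H2.
Proof.
move=> I; rewrite /hh /dcount_pred (dcount_iso t I).
by case: t => [|t] //; rewrite (dcount_iso t I).
Qed.

Lemma hh_sum t m (H : rel 'I_m) :
  hh t H = \sum_u ((if t is t'.+1 then deg H u == t' else false) + (deg H u == t)).
Proof.
rewrite /hh /dcount_pred big_split /= -dcount_sum; congr (_ + _).
case: t => [|t]; last by rewrite dcount_sum.
by rewrite big1.
Qed.

Lemma pt_up (c : nat) (a : bool) t :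
  (if t is t'.+1 then c == t' else false) + (c == t) <=
  (if t is t'.+1 then a + c == t' else false) + (a + c == t) + (a + c == t.+1).
Proof.
case: a t => [] [|t] /=; rewrite ?add0n ?add1n; do ! case: eqP => //=; lia.
Qed.

Lemma pt_lo (c : nat) (a : bool) t :
  (a + c == t) <= (if t is t'.+1 then c == t' else false) + (c == t).
Proof.
case: a t => [] [|t] /=; rewrite ?add0n ?add1n; do ! case: eqP => //=; lia.
Qed.

Lemma card_deg n (G : rel 'I_n.+1) v x :
  deg G (lift v x) = G (lift v x) v + deg (deck_card G v) x.
Proof.
have phi : forall y : 'I_n, insubd v (bump v y) = lift v y.
  move=> y; apply: val_inj; rewrite val_insubd /=.
  by have := ltn_ord (lift v y); rewrite /= => ->.
rewrite !deg_sum (bigD1_ord v) //=; congr (_ + _).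
by apply: eq_bigr => u _; rewrite /deck_card /= !phi.
Qed.

Lemma card_up n (G : rel 'I_n.+1) v t :
  hh t (deck_card G v) <= dcount_pred G t + dcount G t + dcount G t.+1.
Proof.
rewrite /dcount_pred.
have -> : (if t is t'.+1 then dcount G t' else 0) + dcount G t + dcount G t.+1 =
   \sum_w ((if t is t'.+1 then deg G w == t' else false) + (deg G w == t) + (deg G w == t.+1)).
  rewrite !big_split /= -!dcount_sum; congr (_ + _ + _).
  case: t => [|t]; last by rewrite dcount_sum.
  by rewrite big1.
rewrite hh_sum (bigD1_ord v) //=.
apply: leq_trans (leq_addl _ _).
apply: leq_sum => x _; rewrite card_deg; exact: pt_up.
Qed.

Lemma card_lo n (G : rel 'I_n.+1) v t :
  dcount G t <= 1 + hh t (deck_card G v).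
Proof.
rewrite dcount_sum hh_sum (bigD1_ord v) //=.
apply: leq_add; first by case: (_ == _).
apply: leq_sum => x _; rewrite card_deg; exact: pt_lo.
Qed.

Theorem lemma5 (n k t : nat) :
  (3 <= n)%N -> (3 * k <= n)%N -> (t < n)%N ->
  exists f : seq (rel 'I_n.-1) -> R,
    multiset_iso_invariant f /\
    forall G : rel 'I_n, simple_graph G ->
    forall s : seq 'I_n, uniq s -> size s = (n - k)%N ->
      (/ 4 * INR (dcount G t) - 1 <= f (map (deck_card G) s)
       <= INR (dcount_pred G t + dcount G t + dcount G t.+1))%R.
Proof.
case: n => [//|n] H3 Hk Ht.
pose d0 := (fun _ _ : 'I_n => false).
exists (fun s => INR (\max_(i < size s) hh t (nth d0 s i))); split.
  move=> s1 s2 Hs [p Hp]; congr INR.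
  rewrite -!(big_mkord xpredT (fun i => hh t (nth d0 _ i))) Hs !big_mkord.
  rewrite [RHS](reindex_inj (@perm_inj _ p)) /=.
  by apply: eq_bigr => i _; apply: hh_iso; apply: Hp.
move=> G _ s _ Hsz.
have Hs0 : 0 < size (map (deck_card G) s) by rewrite size_map Hsz; lia.
have Hnth : forall i : 'I_(size (map (deck_card G) s)),
    nth d0 (map (deck_card G) s) i = deck_card G (nth ord0 s i).
  move=> i; apply: nth_map; rewrite -(size_map (deck_card G)); exact: ltn_ord.
split.
- have L := @leq_bigmax _ (fun i : 'I_(size (map (deck_card G) s)) =>
                 hh t (nth d0 (map (deck_card G) s) i)) (Ordinal Hs0).
  rewrite /= (Hnth (Ordinal Hs0)) /= in L.
  have L2 := card_lo G (nth ord0 s 0) t.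
  set M := (\max_(i < _) _) in L *.
  have : (dcount G t <= 1 + M)%N by apply: leq_trans L2 _; rewrite leq_add2l.
  move/leP/le_INR; rewrite plus_INR /= => L3.
  have := pos_INR (dcount G t); lra.
- apply: le_INR; apply/leP; apply/bigmax_leqP => i _.
  by rewrite Hnth; apply: card_up.
Qed.
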